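(* Let $p$ be a prime number, and $G$ a finite group that admits a normal $p$-subgroup $E$. Consider a subgroup $H$ of $E$ with $\text{Ш}_{\omega}^{2}(E,J_{E/H})=0$, and let $\mathcal{D}$ be an admissible set of subgroups of $G$. Then there is an exact sequence \[ 0\rightarrow ((E \cap HG^{\mathrm{der}})/HE^{\mathrm{der}})^{\vee}\rightarrow \operatorname{Sel}_{H,\mathcal{D}}^{2}(G,J_{G/E}) \xrightarrow{j_{*}} \text{Ш}_{\mathcal{D}}^{2}(G,J_{G/H}) \rightarrow 0. \]
   Context: For $H<G$, $J_{G/H}$ is defined by $0\to\mathbb{Z}\to\operatorname{Ind}_H^G\mathbb{Z}\to J_{G/H}\to0$. For $H<E<G$ there is an exact sequence of $G$-lattices $0\to J_{G/E}\xrightarrow{j} J_{G/H}\to \operatorname{Ind}_E^G J_{E/H}\to 0$, and $j_*\colon H^2(G,J_{G/E})\to H^2(G,J_{G/H})$ is the induced map. For a set $\mathcal{D}$ of subgroups, $\text{Ш}^2_{\mathcal{D}}(G,M):=\ker\big(H^2(G,M)\to\bigoplus_{D\in\mathcal{D}}H^2(D,M)\big)$ and $\text{Ш}^2_\omega$ is the case where $\mathcal{D}$ is the set of cyclic subgroups; $\mathcal{D}$ is admissible if it contains all cyclic subgroups and is closed under conjugation. $\operatorname{Sel}_{H,\mathcal{D}}^{2}(G,J_{G/E}):=j_*^{-1}(\text{Ш}^2_{\mathcal{D}}(G,J_{G/H}))\subset H^2(G,J_{G/E})$. $G^{\mathrm{der}}$ denotes the commutator subgroup, and $A^\vee=\mathrm{Hom}(A,\mathbb{Q}/\mathbb{Z})$.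 *)

(* Defs.v *)
From mathcomp Require Import all_boot all_order all_algebra all_fingroup all_solvable.
Set Implicit Arguments. Unset Strict Implicit. Unset Printing Implicit Defensive.
Import GRing.Theory Num.Theory.
Local Open Scope ring_scope.

Section Coh.
Variable gT : finGroupType.

(* Ind_H^A Z, realized as Z-valued functions on gT supported on A and
   right H-invariant (the coset xH <-> its indicator function).  The action
   of g is (g . phi)(x) = phi (g^-1 x). *)
Definition Ind (A H : {set gT}) (phi : gT -> int) : Prop :=
  (forall x, x \notin A -> phi x = 0) /\
  (forall x h, x \in A -> h \in H -> phi (x * h)%g = phi x).

(* phi lies in the image of Z -> Ind_H^A Z (1 |-> sum of all cosets = 1_A);
   so J_{A/H} = Ind_H^A Z / Z and "phi = 0 in J" means IsConst A phi. *)
Definition IsConst (A : {set gT}) (phi : gT -> int) : Prop :=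
  exists n : int, forall x, x \in A -> phi x = n.

(* 2-cochains with values in Ind_H^A Z (representing J_{A/H}-valued cochains) *)
Definition cochain2 := gT -> gT -> gT -> int.

Definition cocycle (A H D : {set gT}) (c : cochain2) : Prop :=
  (forall g1 g2, g1 \in D -> g2 \in D -> Ind A H (c g1 g2)) /\
  (forall g1 g2 g3, g1 \in D -> g2 \in D -> g3 \in D ->
     IsConst A (fun x => c g2 g3 (g1^-1 * x)%g - c (g1 * g2)%g g3 x
                         + c g1 (g2 * g3)%g x - c g1 g2 x)).

Definition coboundary (A H D : {set gT}) (c : cochain2) : Prop :=
  exists b : gT -> gT -> int,
    (forall g, g \in D -> Ind A H (b g)) /\
    (forall g1 g2, g1 \in D -> g2 \in D ->
       IsConst A (fun x => c g1 g2 x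
                   - (b g2 (g1^-1 * x)%g - b (g1 * g2)%g x + b g1 x))).

Definition cohomologous (A H D : {set gT}) (c c' : cochain2) : Prop :=
  coboundary A H D (fun g1 g2 x => c g1 g2 x - c' g1 g2 x).

Definition sha_omega_trivial (E H : {set gT}) : Prop :=
  forall c, cocycle E H E c ->
    (forall C : {group gT}, C \subset E -> cyclic C -> coboundary E H C c) ->
    coboundary E H E c.

Definition admissible (G : {set gT}) (Ds : {set {group gT}}) : Prop :=
  (forall D : {group gT}, D \in Ds -> D \subset G) /\
  (forall C : {group gT}, C \subset G -> cyclic C -> C \in Ds) /\
  (forall (D : {group gT}) g, D \in Ds -> g \in G -> (D :^ g)%G \in Ds).

(* Elements of Hom(K/N, Q/Z), represented by rational lifts *)
Definition dual_elt (K N : {set gT}) (chi : gT -> rat) : Prop :=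
  (forall x y, x \in K -> y \in K -> chi (x * y)%g - chi x - chi y \is a Num.int) /\
  (forall h, h \in N -> chi h \is a Num.int).

Definition dual_eq (K : {set gT}) (chi chi' : gT -> rat) : Prop :=
  forall x, x \in K -> chi x - chi' x \is a Num.int.

End Coh.

(* Main.v *)
Require Import Defs.
From mathcomp Require Import all_boot all_order all_algebra all_fingroup all_solvable.
From mathcomp Require Import ring lra zify.
From Stdlib Require Import ClassicalEpsilon.
Import GRing.Theory Num.Theory.
Local Open Scope ring_scope.

Set Implicit Arguments. Unset Strict Implicit. Unset Printing Implicit Defensive.


Notation Zi q := (q \is a @Num.int rat).
Ltac zsolve := repeat (first [assumption | rewrite rpredN | apply: rpredD | apply: rpred0]).

Section Aux.
Variable gT : finGroupType.


Definition d1 (b : gT -> gT -> rat) g1 g2 x :=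
  b g2 (g1^-1 * x)%g - b (g1 * g2)%g x + b g1 x.
Definition d2 (c : gT -> gT -> gT -> rat) g1 g2 g3 x :=
  c g2 g3 (g1^-1 * x)%g - c (g1 * g2)%g g3 x + c g1 (g2 * g3)%g x - c g1 g2 x.

Lemma dd0 b g1 g2 g3 x : d2 (d1 b) g1 g2 g3 x = 0.
Proof. rewrite /d2 /d1 !invMg !mulgA; ring. Qed.

Lemma sum_transl (D : {group gT}) g (f : gT -> rat) : g \in D ->
  \sum_(k in D) f (g * k)%g = \sum_(k in D) f k.
Proof.
move=> gD; rewrite [RHS](reindex_inj (mulgI g)) /=.
by apply: eq_bigl => k; rewrite groupMl.
Qed.

Lemma cardD_neq0 (D : {group gT}) : (#|D|%:R : rat) != 0.
Proof. by rewrite pnatr_eq0 -lt0n cardG_gt0. Qed.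

Lemma avg2 (D : {group gT}) (X : {set gT}) (c : gT -> gT -> gT -> rat) :
  (forall g1 g2 g3 x y, g1 \in D -> g2 \in D -> g3 \in D -> x \in X -> y \in X ->
     d2 c g1 g2 g3 x = d2 c g1 g2 g3 y) ->
  let beta := fun g x => (#|D|%:R)^-1 * \sum_(k in D) c g k x in
  forall g1 g2 x y, g1 \in D -> g2 \in D -> x \in X -> y \in X ->
   c g1 g2 x - d1 beta g1 g2 x = c g1 g2 y - d1 beta g1 g2 y.
Proof.
move=> hc beta g1 g2 x y g1D g2D xX yX.
have key : forall z, c g1 g2 z - d1 beta g1 g2 z =
   - (#|D|%:R)^-1 * \sum_(k in D) d2 c g1 g2 k z.
  move=> z; rewrite /d1 /beta /d2 sumrB big_split sumrB /=.
  rewrite (@sum_transl D g2 (fun k => c g1 k z) g2D) sumr_const -mulr_natr.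
  by field; apply: cardD_neq0.
rewrite !key; congr (_ * _); apply: eq_bigr => k kD; exact: hc.
Qed.

Lemma avg1 (D : {group gT}) (X : {set gT}) (z : gT -> gT -> rat) :
  (forall g1 g2 x y, g1 \in D -> g2 \in D -> x \in X -> y \in X ->
     z (g1 * g2)%g x - z g1 x - z g2 (g1^-1 * x)%g =
     z (g1 * g2)%g y - z g1 y - z g2 (g1^-1 * y)%g) ->
  let v := fun x => - (#|D|%:R)^-1 * \sum_(k in D) z k x in
  forall g x y, g \in D -> x \in X -> y \in X ->
   z g x - (v (g^-1 * x)%g - v x) = z g y - (v (g^-1 * y)%g - v y).
Proof.
move=> hz v g x y gD xX yX.
have key : forall u, z g u - (v (g^-1 * u)%g - v u) =
   - (#|D|%:R)^-1 * \sum_(k in D) (z (g * k)%g u - z g u - z k (g^-1 * u)%g).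
  move=> u; rewrite /v sumrB sumrB /=.
  rewrite (@sum_transl D g (fun k => z k u) gD) sumr_const -mulr_natr.
  by field; apply: cardD_neq0.
rewrite !key; congr (_ * _); apply: eq_bigr => k kD; exact: hz.
Qed.

Definition charZ (A : {set gT}) (th : gT -> rat) :=
  forall x y, x \in A -> y \in A -> Zi (th (x * y)%g - th x - th y).

Lemma charZ1 (A : {group gT}) th : charZ A th -> Zi (th 1%g).
Proof.
move=> h; have := h 1%g 1%g (group1 A) (group1 A); rewrite mulg1.
move=> h1; have -> : th 1%g = - (th 1%g - th 1%g - th 1%g) by ring.
zsolve.
Qed.

Arguments charZ1 {A th}.

Lemma charZV (A : {group gT}) th x : charZ A th -> x \in A -> Zi (th x^-1%g + th x).
Proof.
move=> h xA; have := h x^-1%g x (groupVr xA) xA; rewrite mulVg => h2.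
have h1 := charZ1 h.
have -> : th x^-1%g + th x = th 1%g - (th 1%g - th x^-1%g - th x) by ring.
zsolve.
Qed.

Arguments charZV {A th x}.

Lemma charZ_der (A : {group gT}) th : charZ A th ->
  forall y, y \in A^`(1)%g -> Zi (th y).
Proof.
move=> h.
have gS : group_set [set y in A | Zi (th y)].
  apply/group_setP; split; first by rewrite inE group1 (charZ1 h).
  move=> x y; rewrite !inE => /andP[xA zx] /andP[yA zy]; rewrite groupM //=.
  have -> : th (x * y)%g = (th (x * y)%g - th x - th y) + th x + th y by ring.
  have hh := h x y xA yA; zsolve.
move=> y; rewrite derg1 /commutator.
have : <<commg_set A A>>%g \subset Group gS.
  rewrite gen_subG; apply/subsetP => _ /imset2P[a b aA bA ->].
  rewrite inE /= groupR //=.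
  rewrite /commg /conjg.
  have e1 := h a^-1%g (b^-1 * (a * b))%g (groupVr aA) (groupM (groupVr bA) (groupM aA bA)).
  have e2 := h b^-1%g (a * b)%g (groupVr bA) (groupM aA bA).
  have e3 := h a b aA bA.
  have e4 := charZV h aA; have e5 := charZV h bA.
  have -> : th (a^-1 * (b^-1 * (a * b)))%g =
     (th (a^-1 * (b^-1 * (a * b)))%g - th a^-1%g - th (b^-1 * (a * b))%g)
   + (th (b^-1 * (a * b))%g - th b^-1%g - th (a * b)%g)
   + (th (a * b)%g - th a - th b)
   + (th a^-1%g + th a) + (th b^-1%g + th b) by ring.
  zsolve.
by move/subsetP => hs /hs; rewrite inE => /andP[].
Qed.

End Aux.


Section Ext.
Variable gT : finGroupType.

Lemma ext_step (A L : {group gT}) (phi : gT -> rat) x :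
  L \subset A -> A^`(1)%g \subset L -> charZ L phi ->
  (forall y, y \in A^`(1)%g -> Zi (phi y)) -> x \in A ->
  exists psi, charZ (L <*> <[x]>)%g psi /\ (forall l, l \in L -> Zi (psi l - phi l)).
Proof.
move=> sLA sAL hphi hder xA.
have nLA : (L <| A)%g by apply: sub_der1_normal.
have joinE : (L <*> <[x]>)%g = (L * <[x]>)%g.
  apply: norm_joinEr; apply: subset_trans (normal_norm nLA).
  by rewrite cycle_subG.
have exm : exists k, (0 < k)%N && (x ^+ k \in L)%g.
  by exists #[x]%g; rewrite order_gt0 expg_order group1.
case: (ex_minnP exm) => m /andP[m0 xmL] mmin.
have conjL : forall a l, a \in A -> l \in L -> Zi (phi (a * (l * a^-1))%g - phi l).
  move=> a l aA lL.
  have cA : ([~ l, a^-1] \in A^`(1))%g by rewrite derg1 mem_commg // ?groupV // (subsetP sLA).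
  have -> : (a * (l * a^-1))%g = (l * [~ l, a^-1])%g by rewrite /commg /conjg invgK mulVKg.
  have h1 := hphi l _ lL (subsetP sAL _ cA); have h2 := hder _ cA.
  have -> : phi (l * [~ l, a^-1])%g - phi l =
    (phi (l * [~ l, a^-1])%g - phi l - phi [~ l, a^-1]%g) + phi [~ l, a^-1]%g by ring.
  zsolve.
have mdvd : forall k, (x ^+ k \in L)%g -> (m %| k)%N.
  move=> k xk; rewrite /dvdn; apply/eqP.
  have : (x ^+ (k %% m) \in L)%g.
    have e : (x ^+ k = (x ^+ m) ^+ (k %/ m) * x ^+ (k %% m))%g.
      by rewrite -expgnA -expgnDr mulnC -divn_eq.
    by rewrite -(groupMl _ (groupX (k %/ m) xmL)) -e.
  case: (posnP (k %% m)) => [//|kp xr].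
  by have := mmin _ (introT andP (conj kp xr)); rewrite leqNgt ltn_pmod.
have powL : forall q, Zi (phi (x ^+ (m * q))%g - q%:R * phi (x ^+ m)%g).
  elim=> [|q IH]; first by rewrite muln0 expg0 mul0r subr0 (charZ1 hphi).
  have uL : (x ^+ (m * q) \in L)%g by rewrite expgnA groupX.
  have e : (x ^+ (m * q.+1) = x ^+ (m * q) * x ^+ m)%g by rewrite mulnS addnC expgnDr.
  rewrite e; have h := hphi _ _ uL xmL.
  have -> : phi (x ^+ (m * q) * x ^+ m)%g - q.+1%:R * phi (x ^+ m)%g =
    (phi (x ^+ (m * q) * x ^+ m)%g - phi (x ^+ (m * q))%g - phi (x ^+ m)%g)
    + (phi (x ^+ (m * q))%g - q%:R * phi (x ^+ m)%g) by rewrite -addn1 natrD; ring.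
  zsolve.
pose al := phi (x ^+ m)%g / m%:R.
have mneq0 : (m%:R : rat) != 0 by rewrite pnatr_eq0 -lt0n.
have claimC : forall y i j, (y * (x ^+ i)^-1 \in L)%g -> (y * (x ^+ j)^-1 \in L)%g ->
   Zi ((phi (y * (x ^+ i)^-1)%g + i%:R * al) - (phi (y * (x ^+ j)^-1)%g + j%:R * al)).
  move=> y i j; wlog le_ij : i j / (i <= j)%N.
    move=> hw hi hj; case: (leqP i j) => h; first exact: hw.
    by rewrite -opprB rpredN; apply: hw => //; apply: ltnW.
  move=> hi hj.
  have xk : (x ^+ (j - i) \in L)%g.
    have -> : (x ^+ (j - i) = (y * (x ^+ j)^-1)^-1 * (y * (x ^+ i)^-1))%g.
      by rewrite expgnFr // invgM invgK mulgA mulgVK.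
    by rewrite groupM ?groupV.
  case/dvdnP: (mdvd _ xk) => q eq.
  have e1 : (y * (x ^+ i)^-1 = (y * (x ^+ j)^-1) * x ^+ (m * q))%g.
    by rewrite mulnC -eq expgnFr // mulgA mulgVK.
  have xmq : (x ^+ (m * q) \in L)%g by rewrite expgnA groupX.
  have h1 := hphi _ _ hj xmq.
  have h2 := powL q.
  have ej : (j%:R : rat) = i%:R + (q * m)%:R by rewrite -eq -natrD subnKC.
  have ea : (q * m)%:R * al = q%:R * phi (x ^+ m)%g by rewrite /al natrM; field.
  rewrite e1 ej.
  have -> : phi (y * (x ^+ j)^-1 * x ^+ (m * q))%g + i%:R * al -
    (phi (y * (x ^+ j)^-1)%g + (i%:R + (q * m)%:R) * al) =
    (phi (y * (x ^+ j)^-1 * x ^+ (m * q))%g - phi (y * (x ^+ j)^-1)%g - phi (x ^+ (m * q))%g)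
    + (phi (x ^+ (m * q))%g - q%:R * phi (x ^+ m)%g) - ((q * m)%:R * al - q%:R * phi (x ^+ m)%g)
    by ring.
  rewrite ea subrr subr0; by zsolve.
pose psi := fun y => if [pick i : 'I_#[x]%g | (y * (x ^+ i)^-1 \in L)%g] is Some i
   then phi (y * (x ^+ i)^-1)%g + (i : nat)%:R * al else 0.
have psispec : forall yy i, (yy * (x ^+ i)^-1 \in L)%g ->
    Zi (psi yy - (phi (yy * (x ^+ i)^-1)%g + i%:R * al)).
  move=> yy i hi; rewrite /psi; case: pickP => [i0 hi0 | hnone]; first exact: claimC.
  by have := hnone (Ordinal (ltn_pmod i (order_gt0 x))); rewrite /= expg_mod_order hi.
have dec : forall y, y \in (L <*> <[x]>)%g -> exists i, (y * (x ^+ i)^-1 \in L)%g.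
  move=> y; rewrite joinE => /mulsgP[l c lL /cycleP[i ->] ->].
  by exists i; rewrite mulgK.
exists psi; split; last first.
  move=> l lL; have := psispec l 0%N; rewrite expg0 invg1 mulg1 mul0r addr0; apply.
  exact: lL.
move=> u v /dec[i hi] /dec[j hj].
set l1 := (u * (x ^+ i)^-1)%g in hi *; set l2 := (v * (x ^+ j)^-1)%g in hj *.
have e : ((u * v) * (x ^+ (i + j))^-1 = l1 * (x ^+ i * (l2 * (x ^+ i)^-1)))%g.
  by rewrite /l1 /l2 expgnDr invgM !mulgA mulgVK.
have cL : (x ^+ i * (l2 * (x ^+ i)^-1) \in L)%g.
  have -> : (x ^+ i * (l2 * (x ^+ i)^-1) = l2 ^ (x ^+ i)^-1)%g by rewrite /conjg invgK.
  by rewrite memJ_norm // groupV; apply: (subsetP (normal_norm nLA)); rewrite groupX.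
have huv : ((u * v) * (x ^+ (i + j))^-1 \in L)%g by rewrite e groupM.
have h1 := psispec _ _ huv; rewrite e in h1.
have h2 := psispec _ _ hi; have h3 := psispec _ _ hj.
have h4 := hphi _ _ hi cL.
have h5 := conjL (x ^+ i)%g l2 (groupX i xA) hj.
rewrite -/l1 -/l2 in h2 h3.
have -> : psi (u * v)%g - psi u - psi v =
  (psi (u * v)%g - (phi (l1 * (x ^+ i * (l2 * (x ^+ i)^-1)))%g + (i + j)%:R * al))
  - (psi u - (phi l1 + i%:R * al)) - (psi v - (phi l2 + j%:R * al))
  + (phi (l1 * (x ^+ i * (l2 * (x ^+ i)^-1)))%g - phi l1 - phi (x ^+ i * (l2 * (x ^+ i)^-1))%g)
  + (phi (x ^+ i * (l2 * (x ^+ i)^-1))%g - phi l2) by rewrite natrD; ring.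
zsolve.
Qed.

Lemma ext_char (A L : {group gT}) (phi : gT -> rat) :
  L \subset A -> A^`(1)%g \subset L -> charZ L phi ->
  (forall y, y \in A^`(1)%g -> Zi (phi y)) ->
  exists th, charZ A th /\ (forall l, l \in L -> Zi (th l - phi l)).
Proof.
move: {2}(#|A| - #|L|)%N (leqnn (#|A| - #|L|)) => n.
elim: n L phi => [|n IH] L phi hn sLA sAL hphi hder.
  case: (boolP (A \subset L)) => [sAL'|nsub].
    exists phi; split; last by move=> l _; rewrite subrr.
    by move=> u v uA vA; apply: hphi; apply: (subsetP sAL').
  case/subsetPn: nsub => x xA xL.
  have : (#|L| < #|A|)%N by apply: proper_card; apply/properP; split => //; exists x.
  by move: hn; lia.
case: (boolP (A \subset L)) => [sAL'|nsub].
  exists phi; split; last by move=> l _; rewrite subrr.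
  by move=> u v uA vA; apply: hphi; apply: (subsetP sAL').
case/subsetPn: nsub => x xA xL.
have [psi [hpsi hpl]] := ext_step sLA sAL hphi hder xA.
set L' := (L <*> <[x]>)%G.
have sLL' : L \subset L' by apply: joing_subl.
have sL'A : L' \subset A by rewrite join_subG sLA cycle_subG.
have ltL : (#|L| < #|L'|)%N.
  apply: proper_card; apply/properP; split => //; exists x => //.
  by apply: (subsetP (joing_subr _ _)); apply: cycle_id.
have leA : (#|L'| <= #|A|)%N by apply: subset_leq_card.
have hn' : (#|A| - #|L'| <= n)%N by move: hn ltL leA; lia.
have hder' : forall y, y \in A^`(1)%g -> Zi (psi y).
  move=> y yd; have h1 := hpl y (subsetP sAL _ yd); have h2 := hder y yd.
  have -> : psi y = (psi y - phi y) + phi y by ring.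
  zsolve.
have [th [hth htl]] := IH L' psi hn' sL'A (subset_trans sAL sLL') hpsi hder'.
exists th; split => // l lL.
have h1 := htl l (subsetP sLL' _ lL); have h2 := hpl l lL.
have -> : th l - phi l = (th l - psi l) + (psi l - phi l) by ring.
zsolve.
Qed.
End Ext.


Section Bridge.
Variable gT : finGroupType.

Definition cQ (c : cochain2 gT) : gT -> gT -> gT -> rat := fun g1 g2 x => (c g1 g2 x)%:~R.

Lemma cocQ (A S D : {set gT}) c : cocycle A S D c ->
  forall g1 g2 g3 x y, g1 \in D -> g2 \in D -> g3 \in D -> x \in A -> y \in A ->
  d2 (cQ c) g1 g2 g3 x = d2 (cQ c) g1 g2 g3 y.
Proof.
move=> [_ hc] g1 g2 g3 x y h1 h2 h3 xA yA.
have [n hn] := hc g1 g2 g3 h1 h2 h3.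
have := hn x xA; have := hn y yA; rewrite /d2 /cQ => ey ex.
by rewrite -!rmorphB -!rmorphD -!rmorphB ex ey.
Qed.

Lemma Q_of_cob (A S D : {set gT}) c : coboundary A S D c ->
  exists b : gT -> gT -> rat,
   [/\ (forall g x, g \in D -> x \notin A -> b g x = 0),
       (forall g x h, g \in D -> x \in A -> h \in S -> b g (x * h)%g = b g x),
       (forall g x, Zi (b g x)) &
       (forall g1 g2 x y, g1 \in D -> g2 \in D -> x \in A -> y \in A ->
          cQ c g1 g2 x - d1 b g1 g2 x = cQ c g1 g2 y - d1 b g1 g2 y)].
Proof.
move=> [b [hb hc]]; exists (fun g x => (b g x)%:~R); split.
- by move=> g x gD xA; case: (hb g gD) => h _; rewrite h.
- by move=> g x h gD xA hS; case: (hb g gD) => _ h'; rewrite h'.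
- by move=> g x; apply: intr_int.
move=> g1 g2 x y h1 h2 xA yA.
have [n hn] := hc g1 g2 h1 h2.
have := hn x xA; have := hn y yA; rewrite /d1 /cQ => ey ex.
by rewrite -!rmorphB -!rmorphD -!rmorphB ex ey.
Qed.

Lemma fK (q : rat) : Zi q -> (Num.floor q)%:~R = q.
Proof. exact: floorK. Qed.

Lemma cob_of_Q (A S D : {group gT}) (c : cochain2 gT) (b : gT -> gT -> rat) :
  (forall g x, g \in D -> x \notin A -> b g x = 0) ->
  (forall g x h, g \in D -> x \in A -> h \in S -> b g (x * h)%g = b g x) ->
  (forall g x, g \in D -> Zi (b g x)) ->
  (forall g1 g2 x, g1 \in D -> g2 \in D -> x \in A ->
     cQ c g1 g2 x - d1 b g1 g2 x = cQ c g1 g2 1%g - d1 b g1 g2 1%g) ->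
  coboundary A S D c.
Proof.
move=> h0 hS hZ hc.
exists (fun g x => Num.floor (b g x)); split.
  move=> g gD; split; first by move=> x xA; rewrite h0 // floor0.
  by move=> x h xA hh; rewrite hS.
move=> g1 g2 h1 h2.
exists (c g1 g2 1%g - (Num.floor (b g2 (g1^-1 * 1)%g) - Num.floor (b (g1 * g2)%g 1%g)
         + Num.floor (b g1 1%g))).
move=> x xA; apply: (@intr_inj rat).
have h12 : (g1 * g2)%g \in D by rewrite groupM.
rewrite !(intrD, intrN) !fK ?hZ //.
by have := hc g1 g2 x h1 h2 xA; rewrite /d1 /cQ.
Qed.

Lemma cob_add (A S D : {set gT}) (c1 c2 : cochain2 gT) :
  coboundary A S D c1 -> coboundary A S D c2 ->
  coboundary A S D (fun g1 g2 x => c1 g1 g2 x + c2 g1 g2 x).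
Proof.
move=> [b1 [hb1 hc1]] [b2 [hb2 hc2]].
exists (fun g x => b1 g x + b2 g x); split.
  move=> g gD; case: (hb1 g gD) => u1 v1; case: (hb2 g gD) => u2 v2; split.
    by move=> x xA; rewrite u1 ?u2.
  by move=> x h xA hH; rewrite v1 ?v2.
move=> g1 g2 h1 h2; have [n1 e1] := hc1 g1 g2 h1 h2; have [n2 e2] := hc2 g1 g2 h1 h2.
exists (n1 + n2) => x xA; rewrite -(e1 x xA) -(e2 x xA); ring.
Qed.

Lemma cob_opp (A S D : {set gT}) (c : cochain2 gT) :
  coboundary A S D c -> coboundary A S D (fun g1 g2 x => - c g1 g2 x).
Proof.
move=> [b [hb hc]]; exists (fun g x => - b g x); split.
  move=> g gD; case: (hb g gD) => u v; split.
    by move=> x xA; rewrite u ?oppr0.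
  by move=> x h xA hH; rewrite v.
move=> g1 g2 h1 h2; have [n e] := hc g1 g2 h1 h2.
exists (- n) => x xA; rewrite -(e x xA); ring.
Qed.

Lemma cob_ext (A S D : {set gT}) (c c' : cochain2 gT) :
  coboundary A S D c ->
  (forall g1 g2 x, g1 \in D -> g2 \in D -> x \in A -> c g1 g2 x = c' g1 g2 x) ->
  coboundary A S D c'.
Proof.
move=> [b [hb hc]] he; exists b; split => // g1 g2 h1 h2.
have [n e] := hc g1 g2 h1 h2; exists n => x xA; rewrite -he //; exact: e.
Qed.

End Bridge.


Section Main.
Variables (gT : finGroupType) (G E H : {group gT}).
Hypotheses (nEG : (E <| G)%g) (sHE : H \subset E).

Let sEG : E \subset G := normal_sub nEG.
Let sHG : H \subset G := subset_trans sHE sEG.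

Definition r x := repr (x *: E)%g.

Lemma r_mem x : (x^-1 * r x \in E)%g.
Proof.
rewrite -mem_lcoset; apply: (mem_repr x); rewrite mem_lcoset mulVg group1 //.
Qed.

Lemma e0E x : ((r x)^-1 * x \in E)%g.
Proof. by rewrite -[X in X \in _]invgK invgM invgK groupV r_mem. Qed.

Lemma rE x e : e \in E -> r (x * e)%g = r x.
Proof. by move=> eE; rewrite /r lcosetM lcoset_id. Qed.

Lemma rG x : x \in G -> r x \in G.
Proof.
move=> xG; rewrite -(mulVKg x (r x)) groupM //; exact: (subsetP sEG _ (r_mem x)).
Qed.

Lemma rdec x : (r x * ((r x)^-1 * x))%g = x.
Proof. by rewrite mulVKg. Qed.

Definition adm (F : gT -> rat) :=
  (forall x h, x \in G -> h \in H -> F (x * h)%g = F x) /\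
  (forall x e, x \in G -> e \in E -> Zi (F (x * e)%g - F x - F e + F 1%g)).

Definition Gam (F : gT -> rat) g x :=
  if x \in G then F (r x) - F (g^-1 * r x)%g else 0.

Lemma Gam_int F g x : adm F -> g \in G -> x \in G ->
  Zi (Gam F g x - (F x - F (g^-1 * x)%g)).
Proof.
move=> [_ hF] gG xG; rewrite /Gam xG.
have rxG := rG xG; have e0 := e0E x.
have h1 := hF _ _ rxG e0; rewrite rdec in h1.
have giG : (g^-1 * r x \in G)%g by rewrite groupM ?groupV.
have h2 := hF _ _ giG e0; rewrite -mulgA rdec in h2.
have -> : F (r x) - F (g^-1 * r x)%g - (F x - F (g^-1 * x)%g) =
  - (F x - F (r x) - F ((r x)^-1 * x)%g + F 1%g) +
  (F (g^-1 * x)%g - F (g^-1 * r x)%g - F ((r x)^-1 * x)%g + F 1%g) by ring.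
by zsolve.
Qed.

Lemma Gam_E F g x e : x \in G -> e \in E -> Gam F g (x * e)%g = Gam F g x.
Proof.
by move=> xG eE; rewrite /Gam groupM ?xG ?(subsetP sEG) // rE.
Qed.

Lemma Gam_out F g x : x \notin G -> Gam F g x = 0.
Proof. by rewrite /Gam => /negbTE ->. Qed.

Lemma notG g x : g \in G -> x \notin G -> (g^-1 * x)%g \notin G.
Proof. by move=> gG; rewrite groupMl ?groupV. Qed.

Definition PsiQ F := d1 (Gam F).

Lemma PsiQ_int F g1 g2 x : adm F -> g1 \in G -> g2 \in G -> Zi (PsiQ F g1 g2 x).
Proof.
move=> hF h1 h2; rewrite /PsiQ /d1.
case: (boolP (x \in G)) => xG; last first.
  by rewrite !Gam_out ?notG // subrr add0r rpred0.
have h12 : (g1 * g2)%g \in G by rewrite groupM.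
have yG : (g1^-1 * x)%g \in G by rewrite groupM ?groupV.
have a1 := Gam_int hF h2 yG; have a2 := Gam_int hF h12 xG.
have a3 := Gam_int hF h1 xG.
rewrite invgM -mulgA in a2.
have -> : Gam F g2 (g1^-1 * x)%g - Gam F (g1 * g2)%g x + Gam F g1 x =
  (Gam F g2 (g1^-1 * x)%g - (F (g1^-1 * x)%g - F (g2^-1 * (g1^-1 * x))%g))
  - (Gam F (g1 * g2)%g x - (F x - F (g2^-1 * (g1^-1 * x))%g))
  + (Gam F g1 x - (F x - F (g1^-1 * x)%g)) by ring.
by zsolve.
Qed.

Definition Psi F : cochain2 gT := fun g1 g2 x => Num.floor (PsiQ F g1 g2 x).

Lemma PsiK F g1 g2 x : adm F -> g1 \in G -> g2 \in G ->
  ((Psi F g1 g2 x)%:~R : rat) = PsiQ F g1 g2 x.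
Proof. by move=> hF h1 h2; rewrite /Psi fK // PsiQ_int. Qed.

Lemma PsiQ_out F g1 g2 x : g1 \in G -> x \notin G -> PsiQ F g1 g2 x = 0.
Proof. by move=> h1 xG; rewrite /PsiQ /d1 !Gam_out ?notG // subrr add0r. Qed.

Lemma PsiQ_E F g1 g2 x e : g1 \in G -> x \in G -> e \in E ->
  PsiQ F g1 g2 (x * e)%g = PsiQ F g1 g2 x.
Proof.
move=> h1 xG eE; rewrite /PsiQ /d1 mulgA.
have yG : (g1^-1 * x)%g \in G by rewrite groupM ?groupV.
by rewrite (Gam_E _ _ yG eE) !(Gam_E _ _ xG eE).
Qed.

Lemma Psi_cocycle F : adm F -> cocycle G E G (Psi F).
Proof.
move=> hF; split.
  move=> g1 g2 h1 h2; split.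
    by move=> x xG; rewrite /Psi PsiQ_out // floor0.
  by move=> x e xG eE; rewrite /Psi PsiQ_E.
move=> g1 g2 g3 h1 h2 h3; exists 0 => x xG.
apply: (@intr_inj rat); rewrite !(intrD, intrN) !PsiK ?groupM //.
by have := dd0 (Gam F) g1 g2 g3 x; rewrite /d2 /PsiQ.
Qed.

Lemma Psi_cobH F : adm F -> coboundary G H G (Psi F).
Proof.
move=> hF; have [hH _] := hF.
apply: (cob_of_Q (b := fun g x => if x \in G then Gam F g x + F (g^-1 * x)%g - F x else 0)).
- by move=> g x gG /negbTE ->.
- move=> g x h gG xG hh; have hE := subsetP sHE _ hh.
  have xhG : (x * h)%g \in G by rewrite groupM // (subsetP sHG).
  have yG : (g^-1 * x)%g \in G by rewrite groupM ?groupV.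
  by rewrite /= xhG xG Gam_E // mulgA (hH _ _ yG hh) (hH _ _ xG hh).
- move=> g x gG /=; case: ifP => xG; last exact: rpred0.
  have := Gam_int hF gG xG.
  have -> : Gam F g x + F (g^-1 * x)%g - F x = Gam F g x - (F x - F (g^-1 * x)%g) by ring.
  by [].
move=> g1 g2 x h1 h2 xG.
have key : forall y, y \in G -> cQ (Psi F) g1 g2 y -
    d1 (fun g x => if x \in G then Gam F g x + F (g^-1 * x)%g - F x else 0) g1 g2 y = 0.
  move=> y yG; rewrite /cQ PsiK // /PsiQ /d1 yG groupM ?groupV // invgM -!mulgA; ring.
by rewrite !key.
Qed.

Lemma Psi_cob0 F : adm F ->
  (forall k, k \in (E :&: (H * G^`(1)))%g -> Zi (F k - F 1%g)) ->
  coboundary G E G (Psi F).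
Proof.
move=> hF hK; have [hH hA] := hF.
pose phi e := F e - F 1%g.
have phiE : charZ E phi.
  move=> x y xE yE; have := hA x y (subsetP sEG _ xE) yE; rewrite /phi.
  by have -> : F (x * y)%g - F 1%g - (F x - F 1%g) - (F y - F 1%g) =
    F (x * y)%g - F x - F y + F 1%g by ring.
have nDG : (G^`(1) <| G)%g := der_normal 1 G.
have joinE : (E <*> G^`(1))%g = (E * G^`(1))%g.
  by apply: norm_joinEr; apply: subset_trans (der_sub 1 G) (normal_norm nEG).
pose L := (E <*> G^`(1))%G.
pose psi y := phi (repr [set e in E | (e^-1 * y)%g \in G^`(1)%g]).
have well : forall y e', e' \in E -> (e'^-1 * y)%g \in G^`(1)%g -> Zi (psi y - phi e').
  move=> y e' e'E hy; rewrite /psi.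
  set S := [set e in E | _].
  have : repr S \in S by apply: (mem_repr e'); rewrite inE e'E hy.
  set s := repr S; rewrite inE => /andP[sE sy].
  have hk : ((s^-1 * e') \in E :&: (H * G^`(1)))%g.
    rewrite inE groupM ?groupV //=.
    have -> : (s^-1 * e' = 1 * ((s^-1 * y) * (e'^-1 * y)^-1))%g.
      by rewrite mul1g invgM invgK !mulgA mulgK.
    by apply: mem_mulg; [exact: group1 | rewrite groupM ?groupV].    
  have h1 := hK _ hk.
  have h2 := phiE s (s^-1 * e')%g sE (groupM (groupVr sE) e'E); rewrite mulVKg in h2.
  have -> : phi s - phi e' = - (phi e' - phi s - phi (s^-1 * e')%g) - phi (s^-1 * e')%g by ring.
  by zsolve.
have decL : forall y, y \in L -> exists e, e \in E /\ (e^-1 * y)%g \in G^`(1)%g.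
  move=> y; rewrite /L /= joinE => /mulsgP[e z eE zD ->]; exists e; split => //.
  by rewrite mulKg.
have psiL : charZ L psi.
  move=> y1 y2 /decL[e1 [e1E z1]] /decL[e2 [e2E z2]].
  have e2G := subsetP sEG _ e2E.
  have hv : ((e1 * e2)^-1 * (y1 * y2) \in G^`(1))%g.
    have -> : ((e1 * e2)^-1 * (y1 * y2) = ((e1^-1 * y1) ^ e2) * (e2^-1 * y2))%g.
      by rewrite /conjg invgM !mulgA mulgK.
    by rewrite groupM // memJ_norm // (subsetP (normal_norm nDG)).
  have h1 := well _ _ (groupM e1E e2E) hv.
  have h2 := well _ _ e1E z1; have h3 := well _ _ e2E z2; have h4 := phiE _ _ e1E e2E.
  have -> : psi (y1 * y2)%g - psi y1 - psi y2 =
    (psi (y1 * y2)%g - phi (e1 * e2)%g) - (psi y1 - phi e1) - (psi y2 - phi e2)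
    + (phi (e1 * e2)%g - phi e1 - phi e2) by ring.
  by zsolve.
have psiD : forall y, y \in G^`(1)%g -> Zi (psi y).
  move=> y yD; have := well y 1%g (group1 E); rewrite invg1 mul1g /phi subrr subr0.
  by apply.
have psiE : forall e, e \in E -> Zi (psi e - phi e).
  by move=> e eE; apply: well => //; rewrite mulVg group1.
have sLG : L \subset G by rewrite join_subG sEG der_sub.
have [th [thG thL]] := ext_char sLG (joing_subr _ _) psiL psiD.
have thE : forall e, e \in E -> Zi (th e - phi e).
  move=> e eE; have h1 := thL e (subsetP (joing_subl _ _) _ eE); have h2 := psiE e eE.
  have -> : th e - phi e = (th e - psi e) + (psi e - phi e) by ring.
  by zsolve.
pose u y := F y - th y.
pose w y := u (r y).
have wu : forall y, y \in G -> Zi (w y - u y).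
  move=> y yG; have e0 := e0E y; have ryG := rG yG.
  have h1 := hA _ _ ryG e0; rewrite rdec in h1.
  have h2 := thG _ _ ryG (subsetP sEG _ e0); rewrite rdec in h2.
  have h3 := thE _ e0.
  have -> : w y - u y = - (F y - F (r y) - F ((r y)^-1 * y)%g + F 1%g)
     + (th y - th (r y) - th ((r y)^-1 * y)%g) + (th ((r y)^-1 * y)%g - phi ((r y)^-1 * y)%g).
    by rewrite /w /u /phi; ring.
  by zsolve.
pose b := fun g x => if x \in G then Gam F g x - (w x - w (g^-1 * x)%g + th g) else 0.
apply: (cob_of_Q (b := b)).
- by move=> g x gG xG; rewrite /b (negbTE xG).
- move=> g x e gG xG eE.
  have xeG : (x * e)%g \in G by rewrite groupM // (subsetP sEG).
  by rewrite /b xeG xG Gam_E // /w (@rE x e eE) mulgA (@rE (g^-1 * x)%g e eE).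
- move=> g x gG; rewrite /b; case: ifP => xG; last exact: rpred0.
  have yG : (g^-1 * x)%g \in G by rewrite groupM ?groupV.
  have h1 := Gam_int hF gG xG; have h2 := wu x xG; have h3 := wu _ yG.
  have h4 := thG _ _ gG yG; rewrite mulVKg in h4.
  have -> : Gam F g x - (w x - w (g^-1 * x)%g + th g) =
    (Gam F g x - (F x - F (g^-1 * x)%g)) - (w x - u x) + (w (g^-1 * x)%g - u (g^-1 * x)%g)
    + (th x - th g - th (g^-1 * x)%g) by rewrite /u; ring.
  by zsolve.
move=> g1 g2 x h1 h2 xG.
have key : forall y, y \in G -> cQ (Psi F) g1 g2 y - d1 b g1 g2 y = th g2 - th (g1 * g2)%g + th g1.
  move=> y yG; have y1G : (g1^-1 * y)%g \in G by rewrite groupM ?groupV.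
  rewrite /cQ PsiK ?groupM // /PsiQ /d1 /b yG y1G invgM -!mulgA; ring.
by rewrite !key.
Qed.

Lemma Psi_inj F : adm F -> coboundary G E G (Psi F) ->
  forall k, k \in (E :&: (H * G^`(1)))%g -> Zi (F k - F 1%g).
Proof.
move=> hF hc; have [hH hA] := hF.
have [b [b0 bE bZ bc]] := Q_of_cob hc.
pose z g x := Gam F g x - b g x.
have hz : forall g1 g2 x y, g1 \in G -> g2 \in G -> x \in G -> y \in G ->
     z (g1 * g2)%g x - z g1 x - z g2 (g1^-1 * x)%g =
     z (g1 * g2)%g y - z g1 y - z g2 (g1^-1 * y)%g.
  move=> g1 g2 x y h1 h2 xG yG.
  have key : forall t, z (g1 * g2)%g t - z g1 t - z g2 (g1^-1 * t)%g =
     - (cQ (Psi F) g1 g2 t - d1 b g1 g2 t).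
    by move=> t; rewrite /cQ PsiK // /PsiQ /d1 /z; ring.
  by rewrite !key (bc g1 g2 x y).
pose v := fun x => - (#|G|%:R)^-1 * \sum_(k in G) z k x.
have av : forall g x y, g \in G -> x \in G -> y \in G ->
   z g x - (v (g^-1 * x)%g - v x) = z g y - (v (g^-1 * y)%g - v y) := avg1 hz.
have vE : forall x e, x \in G -> e \in E -> v (x * e)%g = v x.
  move=> x e xG eE; rewrite /v; congr (_ * _); apply: eq_bigr => k kG.
  by rewrite /z Gam_E // bE.
pose u x := F x + v x.
pose th g := u 1%g - u (g^-1 * 1)%g.
have rel : forall g x, g \in G -> x \in G -> Zi (u x - u (g^-1 * x)%g - th g).
  move=> g x gG xG; have a := av g x 1%g gG xG (group1 G).
  have h1 := Gam_int hF gG xG; have h2 := Gam_int hF gG (group1 G).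
  have h3 := bZ g x; have h4 := bZ g 1%g.
  have -> : u x - u (g^-1 * x)%g - th g =
    - (Gam F g x - (F x - F (g^-1 * x)%g)) + (Gam F g 1%g - (F 1%g - F (g^-1 * 1)%g))
    + b g x - b g 1%g
    + ((z g x - (v (g^-1 * x)%g - v x)) - (z g 1%g - (v (g^-1 * 1)%g - v 1%g)))
    by rewrite /th /u /z /=; ring.
  by rewrite a subrr addr0; zsolve.
have thG : charZ G th.
  move=> g1 g2 h1 h2; have h12 : (g1 * g2)%g \in G by rewrite groupM.
  have R1 := rel _ _ h1 h12; rewrite mulKg in R1.
  have R2 := rel _ _ h2 h2; rewrite mulVg in R2.
  have R3 := rel _ _ h12 h12; rewrite mulVg in R3.
  have -> : th (g1 * g2)%g - th g1 - th g2 =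
    - (u (g1 * g2)%g - u 1%g - th (g1 * g2)%g) + (u (g1 * g2)%g - u g2 - th g1)
    + (u g2 - u 1%g - th g2) by ring.
  by zsolve.
move=> k; rewrite inE => /andP[kE /mulsgP[h y hh yD ek]].
have hy := charZ_der thG yD.
have hE := subsetP sHE _ hh; have hG := subsetP sHG _ hh.
have yG := subsetP (der_sub 1 G) _ yD.
have kG := subsetP sEG _ kE.
have thh : th h = 0.
  rewrite /th /u mulg1 -[(h^-1)%g]mul1g vE ?group1 ?groupV // hH ?group1 ?groupV //.
  by rewrite subrr.
have thk : th k = F 1%g - F k^-1%g.
  rewrite /th /u mulg1 -[(k^-1)%g]mul1g vE ?group1 ?groupV // mul1g; ring.
have hc1 := thG _ _ hG yG; rewrite -ek in hc1.
have ha := hA _ _ (groupVr kG) kE; rewrite mulVg in ha.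
have -> : F k - F 1%g = (th k - th h - th y) + th h + th y
   - (F 1%g - F k^-1%g - F k + F 1%g) by rewrite thk; ring.
have hth : Zi (th h) by rewrite thh rpred0.
by zsolve.
Qed.

Lemma ker_img (c : cochain2 gT) : cocycle G E G c -> coboundary G H G c ->
  exists F, adm F /\ cohomologous G E G c (Psi F).
Proof.
move=> hc hcb.
have cc := cocQ hc.
pose be := fun g x => (#|G|%:R)^-1 * \sum_(k in G) cQ c g k x.
have hbe : forall g1 g2 x y, g1 \in G -> g2 \in G -> x \in G -> y \in G ->
   cQ c g1 g2 x - d1 be g1 g2 x = cQ c g1 g2 y - d1 be g1 g2 y := avg2 cc.
have [b [b0 bH bZ bc]] := Q_of_cob hcb.
pose z g x := b g x - be g x.
have hz : forall g1 g2 x y, g1 \in G -> g2 \in G -> x \in G -> y \in G ->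
     z (g1 * g2)%g x - z g1 x - z g2 (g1^-1 * x)%g =
     z (g1 * g2)%g y - z g1 y - z g2 (g1^-1 * y)%g.
  move=> g1 g2 x y h1 h2 xG yG.
  have key : forall t, z (g1 * g2)%g t - z g1 t - z g2 (g1^-1 * t)%g =
     (cQ c g1 g2 t - d1 b g1 g2 t) - (cQ c g1 g2 t - d1 be g1 g2 t).
    by move=> t; rewrite /d1 /z; ring.
  by rewrite !key (bc g1 g2 x y) // (hbe g1 g2 x y).
pose v := fun x => - (#|G|%:R)^-1 * \sum_(k in G) z k x.
have av : forall g x y, g \in G -> x \in G -> y \in G ->
   z g x - (v (g^-1 * x)%g - v x) = z g y - (v (g^-1 * y)%g - v y) := avg1 hz.
have [hind _] := hc.
have beE : forall g x e, g \in G -> x \in G -> e \in E -> be g (x * e)%g = be g x.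
  move=> g x e gG xG eE; rewrite /be; congr (_ * _); apply: eq_bigr => k kG.
  by rewrite /cQ; case: (hind g k gG kG) => _ ->.
have vH : forall x h, x \in G -> h \in H -> v (x * h)%g = v x.
  move=> x h xG hh; rewrite /v; congr (_ * _); apply: eq_bigr => k kG.
  by rewrite /z bH // beE // (subsetP sHE).
have hv : adm v.
  split => // x e xG eE.
  have a := av x^-1%g e 1%g (groupVr xG) (subsetP sEG _ eE) (group1 G).
  rewrite invgK mulg1 in a.
  have e1 : be x^-1%g e = be x^-1%g 1%g.
    by rewrite -[e]mul1g beE ?group1 ?groupV.
  have h1 := bZ x^-1%g e; have h2 := bZ x^-1%g 1%g.
  have -> : v (x * e)%g - v x - v e + v 1%g =
    (b x^-1%g e - b x^-1%g 1%g) - (be x^-1%g e - be x^-1%g 1%g)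
    - ((z x^-1%g e - (v (x * e)%g - v e)) - (z x^-1%g 1%g - (v x - v 1%g)))
    by rewrite /z; ring.
  by rewrite a e1 !subrr subr0; zsolve.
exists v; split => //.
pose ka g := z g 1%g - (v (g^-1 * 1)%g - v 1%g).
have avk : forall g y, g \in G -> y \in G -> z g y - (v (g^-1 * y)%g - v y) = ka g.
  by move=> g y gG yG; rewrite /ka (av g y 1%g) ?group1.
pose b' := fun g x => if x \in G then be g x + ka g - Gam v g x else 0.
apply: (cob_of_Q (b := b')).
- by move=> g x gG xG; rewrite /b' (negbTE xG).
- move=> g x e gG xG eE.
  have xeG : (x * e)%g \in G by rewrite groupM // (subsetP sEG).
  by rewrite /b' xeG xG Gam_E // beE.
- move=> g x gG; rewrite /b'; case: ifP => xG; last exact: rpred0.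
  have h1 := Gam_int hv gG xG; have h2 := bZ g x; have a := avk g x gG xG.
  have -> : be g x + ka g - Gam v g x =
    b g x - (Gam v g x - (v x - v (g^-1 * x)%g))
    - ((z g x - (v (g^-1 * x)%g - v x)) - ka g) by rewrite /z; ring.
  by rewrite a subrr subr0; zsolve.
move=> g1 g2 x h1 h2 xG.
have key : forall y, y \in G ->
  cQ (fun g1 g2 x => c g1 g2 x - Psi v g1 g2 x) g1 g2 y - d1 b' g1 g2 y =
  (cQ c g1 g2 y - d1 be g1 g2 y) - (ka g2 - ka (g1 * g2)%g + ka g1).
  move=> y yG; have y1G : (g1^-1 * y)%g \in G by rewrite groupM ?groupV.
  rewrite /cQ !(intrD, intrN) PsiK ?groupM // /PsiQ /d1 /b' yG y1G; ring.
by rewrite !key ?group1 // (hbe g1 g2 x 1%g) ?group1.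
Qed.

Lemma surj (c : cochain2 gT) : sha_omega_trivial E H -> cocycle G H G c ->
  (forall C : {group gT}, C \subset G -> cyclic C -> coboundary G H C c) ->
  exists c', cocycle G E G c' /\ cohomologous G H G c' c.
Proof.
move=> sha hc hloc.
have cc := cocQ hc.
pose be := fun g x => (#|G|%:R)^-1 * \sum_(k in G) cQ c g k x.
have hbe : forall g1 g2 x y, g1 \in G -> g2 \in G -> x \in G -> y \in G ->
   cQ c g1 g2 x - d1 be g1 g2 x = cQ c g1 g2 y - d1 be g1 g2 y := avg2 cc.
have [hind hcoc] := hc.
have beH : forall g x h, g \in G -> x \in G -> h \in H -> be g (x * h)%g = be g x.
  move=> g x h gG xG hh; rewrite /be; congr (_ * _); apply: eq_bigr => k kG.
  by rewrite /cQ; case: (hind g k gG kG) => _ ->.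
have EG := subsetP sEG.
have yEG : forall g x, g \in E -> x \in E -> (g^-1 * x)%g \in E.
  by move=> g x gE xE; rewrite groupM ?groupV.
pose cE : cochain2 gT := fun g1 g2 x => if x \in E then c g1 g2 x else 0.
have cocE : cocycle E H E cE.
  split.
    move=> g1 g2 h1 h2; split; first by move=> x xE; rewrite /cE (negbTE xE).
    move=> x h xE hh; rewrite /cE groupM ?xE ?(subsetP sHE) //.
    by case: (hind g1 g2 (EG _ h1) (EG _ h2)) => _ ->; rewrite ?EG.
  move=> g1 g2 g3 h1 h2 h3.
  have [n hn] := hcoc g1 g2 g3 (EG _ h1) (EG _ h2) (EG _ h3).
  exists n => x xE; rewrite /cE xE yEG //; exact: hn (EG _ xE).
have loc : forall C : {group gT}, C \subset E -> cyclic C -> coboundary E H C cE.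
  move=> C sCE cC; have [b [hb hcb]] := hloc C (subset_trans sCE sEG) cC.
  exists (fun g x => if x \in E then b g x else 0); split.
    move=> g gC; split; first by move=> x xE; rewrite (negbTE xE).
    move=> x h xE hh; rewrite groupM ?xE ?(subsetP sHE) //.
    by case: (hb g gC) => _ ->; rewrite ?EG.
  move=> g1 g2 h1 h2; have [n hn] := hcb g1 g2 h1 h2.
  have g1E := subsetP sCE _ h1.
  exists n => x xE; rewrite /cE xE yEG //; exact: hn (EG _ xE).
have [a [a0 aH aZ ac]] := Q_of_cob (sha cE cocE loc).
pose zE g y := be g y - a g y.
have hz : forall g1 g2 x y, g1 \in E -> g2 \in E -> x \in E -> y \in E ->
     zE (g1 * g2)%g x - zE g1 x - zE g2 (g1^-1 * x)%g =
     zE (g1 * g2)%g y - zE g1 y - zE g2 (g1^-1 * y)%g.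
  move=> g1 g2 x y h1 h2 xE yE.
  have key : forall t, t \in E -> zE (g1 * g2)%g t - zE g1 t - zE g2 (g1^-1 * t)%g =
     (cQ c g1 g2 t - d1 be g1 g2 t) - (cQ cE g1 g2 t - d1 a g1 g2 t).
    by move=> t tE; rewrite /d1 /zE /cQ /cE tE; ring.
  by rewrite !key // (ac g1 g2 x y) // (hbe g1 g2 x y) ?EG.
pose w := fun y => - (#|E|%:R)^-1 * \sum_(k in E) zE k y.
have av : forall e x y, e \in E -> x \in E -> y \in E ->
   zE e x - (w (e^-1 * x)%g - w x) = zE e y - (w (e^-1 * y)%g - w y) := avg1 hz.
pose ka e := zE e 1%g - (w (e^-1 * 1)%g - w 1%g).
have E1 : forall e y, e \in E -> y \in E -> Zi (be e y - w (e^-1 * y)%g + w y - ka e).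
  move=> e y eE yE; have := av e y 1%g eE yE (group1 E); rewrite -/(ka e) => h.
  have -> : be e y - w (e^-1 * y)%g + w y - ka e = a e y by rewrite -h /zE; ring.
  exact: aZ.
have wH : forall y h, y \in E -> h \in H -> w (y * h)%g = w y.
  move=> y h yE hh; rewrite /w; congr (_ * _); apply: eq_bigr => k kE.
  by rewrite /zE beH ?EG // aH.
pose cst g1 g2 := cQ c g1 g2 1%g - d1 be g1 g2 1%g.
have RelB : forall g1 g2 x, g1 \in G -> g2 \in G -> x \in G ->
   be (g1 * g2)%g x = be g1 x + be g2 (g1^-1 * x)%g - cQ c g1 g2 x + cst g1 g2.
  move=> g1 g2 x h1 h2 xG; have := hbe g1 g2 x 1%g h1 h2 xG (group1 G).
  rewrite /cst /d1 => e; lra.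
pose F x := w ((r x)^-1 * x)%g - be (r x) x.
have FH : forall x h, x \in G -> h \in H -> F (x * h)%g = F x.
  move=> x h xG hh; have hE := subsetP sHE _ hh.
  by rewrite /F (@rE x h hE) mulgA wH ?e0E // beH ?rG.
pose ga g x := be g x - F (g^-1 * x)%g + F x.
pose ee g x := ((r x)^-1 * g * r (g^-1 * x))%g.
have eeE : forall g x, ee g x \in E.
  move=> g x; have -> : ee g x = ((x^-1 * r x)^-1 * ((g^-1 * x)^-1 * r (g^-1 * x)))%g.
    by rewrite /ee !invgM !invgK !mulgA mulgK.
  by rewrite groupM ?groupV ?r_mem.
pose La g x := ka (ee g x) + cst (r x) (ee g x) - cst g (r (g^-1 * x)%g).
have gaLa : forall g x, g \in G -> x \in G -> Zi (ga g x - La g x).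
  move=> g x gG xG.
  have yG : (g^-1 * x)%g \in G by rewrite groupM ?groupV.
  have RG := rG xG; have R'G := rG yG.
  have B1 := RelB _ _ _ gG R'G xG.
  have B2 := RelB _ _ _ RG (EG _ (eeE g x)) xG.
  have eq1 : (g * r (g^-1 * x) = r x * ee g x)%g by rewrite /ee !mulgA mulgV mul1g.
  rewrite -eq1 in B2.
  have E1' := E1 _ _ (eeE g x) (e0E x).
  have eq2 : ((ee g x)^-1 * ((r x)^-1 * x) = (r (g^-1 * x))^-1 * (g^-1 * x))%g.
    by rewrite /ee !invgM !invgK !mulgA mulgK.
  rewrite eq2 in E1'.
  have i1 : Zi (cQ c g (r (g^-1 * x)%g) x) by apply: intr_int.
  have i2 : Zi (cQ c (r x) (ee g x) x) by apply: intr_int.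
  have -> : ga g x - La g x =
    (be (ee g x) ((r x)^-1 * x)%g - w ((r (g^-1 * x))^-1 * (g^-1 * x))%g
      + w ((r x)^-1 * x)%g - ka (ee g x))
    + cQ c g (r (g^-1 * x)%g) x - cQ c (r x) (ee g x) x.
    by rewrite /ga /La /F; lra.
  by zsolve.
have LaE : forall e, e \in E -> forall g x, La g (x * e)%g = La g x.
  by move=> e eE g x; rewrite /La /ee !mulgA !(@rE _ e eE).
pose b := fun g x => if x \in G then ga g x - La g x else 0.
have bH : forall g x h, g \in G -> x \in G -> h \in H -> b g (x * h)%g = b g x.
  move=> g x h gG xG hh; have hE := subsetP sHE _ hh.
  have xhG : (x * h)%g \in G by rewrite groupM // EG.
  have yG : (g^-1 * x)%g \in G by rewrite groupM ?groupV.
  by rewrite /b xhG xG (LaE _ hE) /ga beH // mulgA (FH _ _ yG hh) (FH _ _ xG hh).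
have bZ' : forall g x, g \in G -> Zi (b g x).
  by move=> g x gG; rewrite /b; case: ifP => xG; [apply: gaLa | apply: rpred0].
pose bZ g x := Num.floor (b g x).
have bQ : forall g x, g \in G -> ((bZ g x)%:~R : rat) = b g x.
  by move=> g x gG; rewrite /bZ fK ?bZ'.
pose c' : cochain2 gT := fun g1 g2 x => c g1 g2 x - (bZ g2 (g1^-1 * x)%g - bZ (g1 * g2)%g x + bZ g1 x).
have key1 : forall g1 g2 t, g1 \in G -> g2 \in G -> t \in G ->
    cQ c' g1 g2 t = cst g1 g2 + d1 La g1 g2 t.
  move=> g1 g2 t h1 h2 tG.
  have y1G : (g1^-1 * t)%g \in G by rewrite groupM ?groupV.
  have h := hbe g1 g2 t 1%g h1 h2 tG (group1 G); rewrite /d1 in h.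
  rewrite /cQ /c' !(intrD, intrN) !bQ ?groupM // /b tG y1G /ga /cst /d1.
  rewrite invgM -[(g2^-1 * g1^-1 * t)%g]mulgA.
  rewrite /cQ in h; lra.
exists c'; split.
  split.
    move=> g1 g2 h1 h2; split.
      move=> x xG; case: (hind g1 g2 h1 h2) => h0 _.
      rewrite /c' h0 // /bZ /b (negbTE xG) (negbTE (notG h1 xG)) floor0.
      by [].
    move=> x e xG eE; apply: (@intr_inj rat).
    have xeG : (x * e)%g \in G by rewrite groupM // EG.
    have := key1 g1 g2 (x * e)%g h1 h2 xeG; rewrite /cQ => ->.
    have := key1 g1 g2 x h1 h2 xG; rewrite /cQ => ->.
    by rewrite /d1 mulgA !(LaE _ eE).
  move=> g1 g2 g3 h1 h2 h3.
  exists (c' g2 g3 (g1^-1 * 1)%g - c' (g1 * g2)%g g3 1%g + c' g1 (g2 * g3)%g 1%g - c' g1 g2 1%g).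
  move=> x xG; apply: (@intr_inj rat).
  have A := cc g1 g2 g3 x 1%g h1 h2 h3 xG (group1 G).
  have B := dd0 (fun g y => ((bZ g y)%:~R : rat)) g1 g2 g3 x.
  have B' := dd0 (fun g y => ((bZ g y)%:~R : rat)) g1 g2 g3 1%g.
  rewrite /d2 /d1 /cQ /= in A B B'.
  rewrite /c' !(intrD, intrN); lra.
exists (fun g x => - bZ g x); split.
  move=> g gG; split.
    by move=> x xG; rewrite /bZ /b (negbTE xG) floor0 oppr0.
  by move=> x h xG hh; rewrite /bZ bH.
move=> g1 g2 h1 h2; exists 0 => x xG; rewrite /c'; ring.
Qed.

Lemma adm_sub F1 F2 : adm F1 -> adm F2 -> adm (fun y => F1 y - F2 y).
Proof.
move=> [a1 b1] [a2 b2]; split; first by move=> x h xG hh; rewrite a1 ?a2.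
move=> x e xG eE; have h1 := b1 x e xG eE; have h2 := b2 x e xG eE.
have -> : F1 (x * e)%g - F2 (x * e)%g - (F1 x - F2 x) - (F1 e - F2 e) + (F1 1%g - F2 1%g) =
  (F1 (x * e)%g - F1 x - F1 e + F1 1%g) - (F2 (x * e)%g - F2 x - F2 e + F2 1%g) by ring.
by zsolve.
Qed.

Lemma adm_add F1 F2 : adm F1 -> adm F2 -> adm (fun y => F1 y + F2 y).
Proof.
move=> [a1 b1] [a2 b2]; split; first by move=> x h xG hh; rewrite a1 ?a2.
move=> x e xG eE; have h1 := b1 x e xG eE; have h2 := b2 x e xG eE.
have -> : F1 (x * e)%g + F2 (x * e)%g - (F1 x + F2 x) - (F1 e + F2 e) + (F1 1%g + F2 1%g) =
  (F1 (x * e)%g - F1 x - F1 e + F1 1%g) + (F2 (x * e)%g - F2 x - F2 e + F2 1%g) by ring.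
by zsolve.
Qed.

Lemma Gam_sub F1 F2 g x :
  Gam (fun y => F1 y - F2 y) g x = Gam F1 g x - Gam F2 g x.
Proof. by rewrite /Gam; case: ifP => _; [ring | rewrite subrr]. Qed.

Lemma Gam_add F1 F2 g x :
  Gam (fun y => F1 y + F2 y) g x = Gam F1 g x + Gam F2 g x.
Proof. by rewrite /Gam; case: ifP => _; [ring | rewrite addr0]. Qed.

Lemma Psi_sub F1 F2 g1 g2 x : adm F1 -> adm F2 -> g1 \in G -> g2 \in G ->
  Psi (fun y => F1 y - F2 y) g1 g2 x = Psi F1 g1 g2 x - Psi F2 g1 g2 x.
Proof.
move=> h1 h2 g1G g2G; apply: (@intr_inj rat).
have hs := adm_sub h1 h2; rewrite intrD intrN !PsiK //.
rewrite /PsiQ /d1 !Gam_sub; ring.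
Qed.

Lemma Psi_add F1 F2 g1 g2 x : adm F1 -> adm F2 -> g1 \in G -> g2 \in G ->
  Psi (fun y => F1 y + F2 y) g1 g2 x = Psi F1 g1 g2 x + Psi F2 g1 g2 x.
Proof.
move=> h1 h2 g1G g2G; apply: (@intr_inj rat).
have hs := adm_add h1 h2; rewrite intrD !PsiK //.
rewrite /PsiQ /d1 !Gam_add; ring.
Qed.

Definition Fphi (phi : gT -> rat) x := phi (repr (((r x)^-1 * x) *: H)%g).

Lemma Fphi_approx phi : charZ E phi -> (forall h, h \in H -> Zi (phi h)) ->
  forall x, Zi (Fphi phi x - phi ((r x)^-1 * x)%g).
Proof.
move=> hphi hH x; rewrite /Fphi; set u := ((r x)^-1 * x)%g.
have uE : u \in E by apply: e0E.
have : repr (u *: H)%g \in (u *: H)%g by apply: (mem_repr u); rewrite mem_lcoset mulVg group1.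
set s := repr _; rewrite mem_lcoset => sH.
have h := hphi u (u^-1 * s)%g uE (subsetP sHE _ sH); rewrite mulVKg in h.
have h' := hH _ sH.
have -> : phi s - phi u = (phi s - phi u - phi (u^-1 * s)%g) + phi (u^-1 * s)%g by ring.
by zsolve.
Qed.

Lemma Fphi_adm phi : charZ E phi -> (forall h, h \in H -> Zi (phi h)) ->
  adm (Fphi phi) /\ (forall e, e \in E -> Zi (Fphi phi e - Fphi phi 1%g - phi e)).
Proof.
move=> hphi hH.
have re : forall e, e \in E -> r e = r 1%g.
  by move=> e eE; rewrite -[in LHS](mul1g e) rE.
have r1E : ((r 1%g)^-1)%g \in E by rewrite groupV; have := r_mem 1%g; rewrite invg1 mul1g.
have ap := Fphi_approx hphi hH.
split; last first.
  move=> e eE; have h1 := ap e; have h2 := ap 1%g.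
  rewrite (re e eE) in h1; rewrite mulg1 in h2.
  have h3 := hphi _ _ r1E eE.
  have -> : Fphi phi e - Fphi phi 1%g - phi e =
    (Fphi phi e - phi ((r 1%g)^-1 * e)%g) - (Fphi phi 1%g - phi ((r 1%g)^-1)%g)
    + (phi ((r 1%g)^-1 * e)%g - phi ((r 1%g)^-1)%g - phi e) by ring.
  by zsolve.
split.
  move=> x h xG hh; have hE := subsetP sHE _ hh.
  by rewrite /Fphi (@rE x h hE) mulgA lcosetM lcoset_id.
move=> x e xG eE.
have h1 := ap (x * e)%g; rewrite (@rE x e eE) mulgA in h1.
have h2 := ap x; have h3 := ap e; rewrite (re e eE) in h3.
have h4 := ap 1%g; rewrite mulg1 in h4.
have uE := e0E x.
have h5 := hphi _ _ uE eE; have h6 := hphi _ _ r1E eE.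
have -> : Fphi phi (x * e)%g - Fphi phi x - Fphi phi e + Fphi phi 1%g =
  (Fphi phi (x * e)%g - phi ((r x)^-1 * x * e)%g) - (Fphi phi x - phi ((r x)^-1 * x)%g)
  - (Fphi phi e - phi ((r 1%g)^-1 * e)%g) + (Fphi phi 1%g - phi ((r 1%g)^-1)%g)
  + (phi ((r x)^-1 * x * e)%g - phi ((r x)^-1 * x)%g - phi e)
  - (phi ((r 1%g)^-1 * e)%g - phi ((r 1%g)^-1)%g - phi e) by ring.
by zsolve.
Qed.

End Main.

Unset Implicit Arguments.
Set Strict Implicit.

Theorem lemma4p6 (gT : finGroupType) (p : nat) (G E H : {group gT})
    (Ds : {set {group gT}}) :
  prime p -> (p.-group E)%g -> (E <| G)%g -> H \subset E ->
  sha_omega_trivial E H -> admissible G Ds ->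
  let K := E :&: (H * G^`(1))%g in
  let N := (H * E^`(1))%g in
  (* j_* maps Sel onto Sha^2_D(G, J_{G/H}) *)
  (forall c, cocycle G H G c -> (forall D : {group gT}, D \in Ds -> coboundary G H D c) ->
     exists c', cocycle G E G c' /\ cohomologous G H G c' c) /\
  (* an injective homomorphism ((K/N)^vee -> Sel) whose image is ker j_* *)
  (exists psi : (gT -> rat) -> cochain2 gT,
     (forall chi, dual_elt K N chi ->
        cocycle G E G (psi chi) /\ coboundary G H G (psi chi)) /\
     (forall chi chi', dual_elt K N chi -> dual_elt K N chi' -> dual_eq K chi chi' ->
        cohomologous G E G (psi chi) (psi chi')) /\
     (forall chi chi', dual_elt K N chi -> dual_elt K N chi' ->
        cohomologous G E G (psi (fun x => chi x + chi' x))
                           (fun g1 g2 x => psi chi g1 g2 x + psi chi' g1 g2 x)) /\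
     (forall chi, dual_elt K N chi -> coboundary G E G (psi chi) ->
        dual_eq K chi (fun _ => 0)) /\
     (forall c, cocycle G E G c -> coboundary G H G c ->
        exists chi, dual_elt K N chi /\ cohomologous G E G c (psi chi))).
Proof.
move=> _ _ nEG sHE sha [_ [adm2 _]] K N.
have sEG : E \subset G := normal_sub nEG.
have sHG : H \subset G := subset_trans sHE sEG.
split.
  move=> c hc hD; apply: (surj nEG sHE sha hc) => C sCG cC.
  by apply: hD; apply: adm2.
have nDG : (G^`(1) <| G)%g := der_normal 1 G.
have KE : (K = E :&: (H <*> G^`(1)))%g.
  by rewrite /K norm_joinEl //; apply: subset_trans sHG (normal_norm nDG).
pose KG := (E :&: (H <*> G^`(1)))%G.
have sKE : K \subset E by rewrite KE subsetIl.
have sNK : N \subset K.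
  apply/subsetP => z; rewrite /N => /mulsgP[h y1 hh yD ->].
  have hE := subsetP sHE _ hh; have yE := subsetP (der_sub 1 E) _ yD.
  rewrite /K inE groupM //=.
  by apply: mem_mulg => //; apply: (subsetP (dergS 1 sEG)).
have sDN : (E^`(1) \subset N)%g.
  by apply/subsetP => y yD; rewrite -[y]mul1g; apply: mem_mulg.
have sHN : H \subset N.
  by apply/subsetP => h hh; rewrite -[h]mulg1; apply: mem_mulg.
have sDK : (E^`(1) \subset KG)%g by rewrite /= -KE; apply: subset_trans sDN sNK.
pose extP (chi : gT -> rat) th := charZ E th /\ (forall k, k \in K -> Zi (th k - chi k)).
pose ext chi := epsilon (inhabits chi) (extP chi).
have extS : forall chi, dual_elt K N chi -> extP chi (ext chi).
  move=> chi [h1 h2]; apply: epsilon_spec.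
  have sKE' : KG \subset E by rewrite /= -KE.
  have hK : charZ KG chi by rewrite /= -KE.
  have [th [t1 t2]] := ext_char sKE' sDK hK (fun y yD => h2 y (subsetP sDN _ yD)).
  by exists th; split => // k; rewrite KE; apply: t2.
pose F chi := Fphi E H (ext chi).
have FS : forall chi, dual_elt K N chi ->
    adm G E H (F chi) /\ (forall k, k \in K -> Zi (F chi k - F chi 1%g - chi k)).
  move=> chi hd; have [e1 e2] := extS chi hd.
  have kH : forall h, h \in H -> Zi (ext chi h).
    move=> h hh; have hk := subsetP sNK _ (subsetP sHN _ hh).
    have a := e2 h hk; have b := (hd.2 h (subsetP sHN _ hh)).
    have -> : ext chi h = (ext chi h - chi h) + chi h by ring.
    by zsolve.
  have [a1 a2] := Fphi_adm G sHE e1 kH; split => // k kK.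
  have b1 := a2 k (subsetP sKE _ kK); have b2 := e2 k kK.
  have -> : F chi k - F chi 1%g - chi k =
    (Fphi E H (ext chi) k - Fphi E H (ext chi) 1%g - ext chi k) + (ext chi k - chi k) by rewrite /F; ring.
  by zsolve.
pose psi chi := Psi G E (F chi).
exists psi; split.
  move=> chi hd; have [a _] := FS chi hd.
  by rewrite /psi; split; [apply: (Psi_cocycle nEG a) | apply: (Psi_cobH nEG sHE a)].
split.
  move=> chi chi' hd hd' heq; have [a1 b1] := FS chi hd; have [a2 b2] := FS chi' hd'.
  apply: (cob_ext (c := Psi G E (fun y => F chi y - F chi' y))).
    apply: (Psi_cob0 nEG (adm_sub a1 a2)) => k kK.
    have c1 := b1 k kK; have c2 := b2 k kK; have c3 := heq k kK.
    have -> : F chi k - F chi' k - (F chi 1%g - F chi' 1%g) =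
      (F chi k - F chi 1%g - chi k) - (F chi' k - F chi' 1%g - chi' k) + (chi k - chi' k) by ring.
    by zsolve.
  by move=> g1 g2 x h1 h2 _; rewrite (Psi_sub nEG x a1 a2 h1 h2).
split.
  move=> chi chi' hd hd'.
  have hd3 : dual_elt K N (fun x => chi x + chi' x).
    split.
      move=> x y xK yK; have := hd.1 x y xK yK; have := hd'.1 x y xK yK => c1 c2.
      have -> : chi (x * y)%g + chi' (x * y)%g - (chi x + chi' x) - (chi y + chi' y) =
        (chi (x * y)%g - chi x - chi y) + (chi' (x * y)%g - chi' x - chi' y) by ring.
      by zsolve.
    by move=> h hN; apply: rpredD; [apply: hd.2 | apply: hd'.2].
  have [a1 b1] := FS chi hd; have [a2 b2] := FS chi' hd'; have [a3 b3] := FS _ hd3.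
  apply: (cob_ext (c := Psi G E (fun y => F (fun x => chi x + chi' x) y - (F chi y + F chi' y)))).
    apply: (Psi_cob0 nEG (adm_sub a3 (adm_add a1 a2))) => k kK.
    have c1 := b1 k kK; have c2 := b2 k kK; have c3 := b3 k kK.
    set F3 := F (fun x => chi x + chi' x).
    rewrite -/F3 in c3.
    have -> : F3 k - (F chi k + F chi' k) - (F3 1%g - (F chi 1%g + F chi' 1%g)) =
      (F3 k - F3 1%g - (chi k + chi' k)) - (F chi k - F chi 1%g - chi k)
      - (F chi' k - F chi' 1%g - chi' k) by ring.
    by zsolve.
  move=> g1 g2 x h1 h2 _.
  by rewrite (Psi_sub nEG x a3 (adm_add a1 a2) h1 h2) (Psi_add nEG x a1 a2 h1 h2).
split.
  move=> chi hd hcb; have [a b] := FS chi hd.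
  have := Psi_inj nEG sHE a hcb => hi k kK.
  have c1 := hi k kK; have c2 := b k kK.
  have -> : chi k - 0 = (F chi k - F chi 1%g) - (F chi k - F chi 1%g - chi k) by ring.
  by zsolve.
move=> c hc hcb.
have [v [hv hcv]] := ker_img nEG sHE hc hcb.
have [vH vA] := hv.
pose chi e := v e - v 1%g.
have chiE : charZ E chi.
  move=> x y xE yE; have := vA x y (subsetP sEG _ xE) yE.
  by have -> : chi (x * y)%g - chi x - chi y = v (x * y)%g - v x - v y + v 1%g
    by rewrite /chi; ring.
have hd : dual_elt K N chi.
  split; first by move=> x y xK yK; apply: chiE; apply: (subsetP sKE).
  move=> _ /mulsgP[h y hh yD ->].
  have hE := subsetP sHE _ hh; have yE := subsetP (der_sub 1 E) _ yD.
  have c1 := chiE _ _ hE yE; have c2 := charZ_der chiE yD.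
  have c3 : chi h = 0 by rewrite /chi -[h]mul1g vH ?group1 // subrr.
  have -> : chi (h * y)%g = (chi (h * y)%g - chi h - chi y) + chi h + chi y by ring.
  by rewrite {2}c3; zsolve.
exists chi; split => //.
have [a b] := FS chi hd.
have cb2 : coboundary G E G (fun g1 g2 x => Psi G E v g1 g2 x - psi chi g1 g2 x).
  apply: (cob_ext (c := Psi G E (fun y => v y - F chi y))).
    apply: (Psi_cob0 nEG (adm_sub hv a)) => k kK.
    have c1 := b k kK.
    have -> : v k - F chi k - (v 1%g - F chi 1%g) = - (F chi k - F chi 1%g - chi k) by rewrite /chi; ring.
    by zsolve.
  by move=> g1 g2 x h1 h2 _; rewrite (Psi_sub nEG x hv a h1 h2).
apply: (cob_ext (cob_add hcv cb2)) => g1 g2 x _ _ _ /=; ring.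
Qed.
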